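(* Let $(A,\cdot,\alpha)$ be a Hom-Malcev algebra over a field $\mathbb{K}$ of characteristic $0$. Then the identity $$J_{\alpha}(w\cdot x,\alpha(y),\alpha(z)) = J_{\alpha}(w,y,z)\cdot\alpha^{2}(x) + \alpha^{2}(w)\cdot J_{\alpha}(x,y,z) - 2J_{\alpha}(y\cdot z,\alpha(w),\alpha(x)) \qquad (\ast)$$ holds for all $w,x,y,z\in A$. Moreover, in any anticommutative multiplicative Hom-algebra $(A,\cdot,\alpha)$ over $\mathbb{K}$, the identity $(\ast)$ (for all $w,x,y,z\in A$) is equivalent to the Hom-Malcev identity $$J_{\alpha}(\alpha(x),\alpha(y),x\cdot z) = J_{\alpha}(x,y,z)\cdot\alpha^{2}(x)$$ for all $x,y,z\in A$.
   Context: A (multiplicative) Hom-algebra is a triple $(A,\cdot,\alpha)$ where $A$ is a vector space over a field $\mathbb{K}$ of characteristic $0$, $\cdot:A\times A\to A$ is bilinear (written $xy$ or $x\cdot y$), and $\alpha:A\to A$ is linear with $\alpha(x\cdot y)=\alpha(x)\cdot\alpha(y)$ for all $x,y$. It is anticommutative if $x\cdot y=-y\cdot x$ for all $x,y$. The Hom-Jacobian is $J_{\alpha}(x,y,z)=xy\cdot\alpha(z)+yz\cdot\alpha(x)+zx\cdot\alpha(y)$, where $xy\cdot\alpha(z)$ means $(x\cdot y)\cdot\alpha(z)$. A Hom-Malcev algebra is an anticommutative multiplicative Hom-algebra satisfying $J_{\alpha}(\alpha(x),\alpha(y),x\cdot z)=J_{\alpha}(x,y,z)\cdot\alpha^{2}(x)$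 for all $x,y,z\in A$. *)

(* Defs.v *)
From HB Require Import structures.
From mathcomp Require Import all_boot all_order all_algebra.
Set Implicit Arguments. Unset Strict Implicit. Unset Printing Implicit Defensive.
Import GRing.Theory.
Local Open Scope ring_scope.

Definition bilinear_mul (K : fieldType) (A : lmodType K) (mul : A -> A -> A) : Prop :=
  (forall (a : K) (x y z : A), mul (a *: x + y) z = a *: mul x z + mul y z) /\
  (forall (a : K) (x y z : A), mul z (a *: x + y) = a *: mul z x + mul z y).

Definition linear_map (K : fieldType) (A : lmodType K) (alpha : A -> A) : Prop :=
  forall (a : K) (x y : A), alpha (a *: x + y) = a *: alpha x + alpha y.

Definition hom_multiplicative {A : Type} (mul : A -> A -> A) (alpha : A -> A) : Prop :=
  forall x y, alpha (mul x y) = mul (alpha x) (alpha y).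

Definition anticommutative (K : fieldType) (A : lmodType K) (mul : A -> A -> A) : Prop :=
  forall x y : A, mul x y = - mul y x.

Definition homJac (K : fieldType) (A : lmodType K) (mul : A -> A -> A) (alpha : A -> A)
  (x y z : A) : A :=
  mul (mul x y) (alpha z) + mul (mul y z) (alpha x) + mul (mul z x) (alpha y).

Definition homMalcev_identity (K : fieldType) (A : lmodType K) (mul : A -> A -> A)
  (alpha : A -> A) : Prop :=
  forall x y z : A,
    homJac mul alpha (alpha x) (alpha y) (mul x z) = mul (homJac mul alpha x y z) (alpha (alpha x)).

Definition is_HomMalcev (K : fieldType) (A : lmodType K) (mul : A -> A -> A)
  (alpha : A -> A) : Prop :=
  anticommutative mul /\ hom_multiplicative mul alpha /\ homMalcev_identity mul alpha.

Definition identity_star (K : fieldType) (A : lmodType K) (mul : A -> A -> A)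
  (alpha : A -> A) : Prop :=
  forall w x y z : A,
    homJac mul alpha (mul w x) (alpha y) (alpha z) =
      mul (homJac mul alpha w y z) (alpha (alpha x))
      + mul (alpha (alpha w)) (homJac mul alpha x y z)
      - (homJac mul alpha (mul y z) (alpha w) (alpha x)) *+ 2.

(* Main.v *)
Require Import Defs.
From Stdlib Require Import ZArith.
From HB Require Import structures.
From mathcomp Require Import all_boot all_order all_algebra.
From mathcomp Require Import ring.
Import GRing.Theory.
Local Open Scope ring_scope.
Definition sz (V : zmodType) := (V * int)%type.
HB.instance Definition _ (V : zmodType) := GRing.Zmodule.on (sz V).
Definition szmul (V : zmodType) (p q : sz V) : sz V := (p.1 *~ q.2 + q.1 *~ p.2, p.2 * q.2).
Definition szone (V : zmodType) : sz V := (0, 1).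
Lemma szA V : associative (@szmul V).
Proof. move=> [a m] [b n] [c k]; rewrite /szmul /=; congr (_,_); last by rewrite mulrA.
rewrite !mulrzDl -!mulrzA; rewrite ![_ * m]mulrC ![_ * n]mulrC. 
rewrite -!addrA; congr (_ + _); rewrite addrC -addrA; congr (_+_). Qed.
Lemma szC V : commutative (@szmul V).
Proof. move=> [a m] [b n]; rewrite /szmul /= addrC mulrC //. Qed.
Lemma sz1 V : left_id (@szone V) (@szmul V).
Proof. move=> [a m]; rewrite /szmul /= mul0rz add0r mulr1z mul1r //. Qed.
Lemma szD V : left_distributive (@szmul V) +%R.
Proof. move=> [a m] [b n] [c k]; rewrite /szmul /=; congr (_,_); last by rewrite mulrDl.
rewrite mulrzDr mulrzDl. rewrite -!addrA; congr (_ + _); rewrite addrCA //. Qed.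
Lemma sz10 V : @szone V != 0.
Proof. by rewrite /szone; apply/eqP; case. Qed.
HB.instance Definition _ (V : zmodType) := GRing.Zmodule_isComNzRing.Build (sz V) (@szA V) (@szC V) (@sz1 V) (@szD V) (@sz10 V).

Definition szinj (V : zmodType) (v : V) : sz V := (v, 0).
Lemma szinj_add V : zmod_morphism (@szinj V).
Proof. by move=> a b; rewrite /szinj; congr (_,_); rewrite subr0. Qed.
HB.instance Definition _ (V : zmodType) := GRing.isZmodMorphism.Build V (sz V) (@szinj V) (@szinj_add V).

Arguments szinj {V}.
Lemma by_ring (V : zmodType) (e : V) : szinj e = 0 -> e = 0.
Proof. by case. Qed.

Definition pk (a b : Z) : Z :=
  let p := Z.min a b in let q := Z.max a b in
  Z.add (Z.add (Z.of_nat 1000) (Z.div (Z.mul (Z.add p q) (Z.add (Z.add p q) (Z.of_nat 1))) (Z.of_nat 2))) q.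

Ltac keyof mul alpha w x y z t :=
  match t with
  | mul ?a ?b =>
      let k1 := keyof mul alpha w x y z a in
      let k2 := keyof mul alpha w x y z b in
      let r := eval vm_compute in (pk k1 k2) in r
  | alpha ?a =>
      let k := keyof mul alpha w x y z a in
      let r := eval vm_compute in (Z.add k (Z.of_nat 5)) in r
  | w => constr:(Z.of_nat 1)
  | x => constr:(Z.of_nat 2)
  | y => constr:(Z.of_nat 3)
  | z => constr:(Z.of_nat 4)
  end.
Ltac acnorm mul alpha AC mNl mNr mxx w x y z :=
  repeat match goal with
  | |- context [mul (- ?u) ?v] => rewrite (mNl u v)
  | |- context [mul ?u (- ?v)] => rewrite (mNr u v)
  | |- context [mul ?u ?u] => rewrite (mxx u)
  | |- context [mul ?u ?v] =>
     let ku := keyof mul alpha w x y z u in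
     let kv := keyof mul alpha w x y z v in
     let b := eval vm_compute in (Z.ltb kv ku) in
     lazymatch b with true => rewrite (AC u v) end
  end.

Lemma stepE (V : zmodType) (l r e : V) (c : int) :
  l = r -> e - (l - r) *~ c = 0 -> e = 0.
Proof. by move=> -> ; rewrite subrr mul0rz subr0. Qed.

Lemma startE (V : zmodType) (P Q : V) : P - Q = 0 -> P = Q.
Proof. by move/eqP; rewrite subr_eq0 => /eqP. Qed.

Lemma natK0 (K : fieldType) (A : lmodType K) (n : nat) (v : A) :
  [pchar K] =i pred0 -> (0 < n)%N -> v *+ n = 0 -> v = 0.
Proof.
move=> /pcharf0P ch n0; rewrite -scaler_nat => /eqP; rewrite scaler_eq0 ch.
by case: n n0 => // n _ /= /eqP.
Qed.

Ltac gen_ring mul :=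
  repeat match goal with |- context [mul ?a ?b] => generalize (mul a b); intro end;
  apply: by_ring; ring.

Ltac fullnorm mul alpha AC HM mDl mDr mNl mNr mxx aD m0l m0r w x y z :=
  rewrite /homJac ?aD ?HM ?aD ?HM ?aD ?HM ?aD ?HM ?mDl ?mDr ?mNl ?mNr ?mDl ?mDr ?mNl ?mNr ?mDl ?mDr ?mNl ?mNr ?mDl ?mDr;
  acnorm mul alpha AC mNl mNr mxx w x y z; rewrite ?m0l ?m0r ?m0l ?m0r ?m0l ?m0r.

Theorem mainTheorem1 (K : fieldType) (A : lmodType K)
  (mul : A -> A -> A) (alpha : A -> A) :
  [pchar K] =i pred0 ->
  bilinear_mul mul -> linear_map alpha ->
  (is_HomMalcev mul alpha -> identity_star mul alpha) /\
  (anticommutative mul -> hom_multiplicative mul alpha ->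
     (identity_star mul alpha <-> homMalcev_identity mul alpha)).
Proof.
move=> ch [bl br] lin.
have mDl : forall u v t, mul (u + v) t = mul u t + mul v t.
  by move=> u v t; rewrite -[u]scale1r bl !scale1r.
have mDr : forall u v t, mul t (u + v) = mul t u + mul t v.
  by move=> u v t; rewrite -[u]scale1r br !scale1r.
have m0l : forall t, mul 0 t = 0.
  by move=> t; apply: (addrI (mul 0 t)); rewrite -mDl !addr0.
have m0r : forall t, mul t 0 = 0.
  by move=> t; apply: (addrI (mul t 0)); rewrite -mDr !addr0.
have mNl : forall u v, mul (- u) v = - mul u v.
  by move=> u v; apply/eqP; rewrite -subr_eq0 opprK -mDl addNr m0l.
have mNr : forall u v, mul u (- v) = - mul u v.
  by move=> u v; apply/eqP; rewrite -subr_eq0 opprK -mDr addNr m0r.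
have aD : forall u v, alpha (u + v) = alpha u + alpha v.
  by move=> u v; rewrite -[u]scale1r lin !scale1r.
have fwd : anticommutative mul -> hom_multiplicative mul alpha ->
    homMalcev_identity mul alpha -> identity_star mul alpha.
  move=> AC HM HMal.
  have mxx : forall u, mul u u = 0.
    move=> u; apply: (@natK0 _ _ 2 _ ch) => //.
    by rewrite mulr2n {1}AC addNr.
  have Lin : forall w x y z,
      homJac mul alpha (alpha w) (alpha y) (mul x z)
      + homJac mul alpha (alpha x) (alpha y) (mul w z)
      = mul (homJac mul alpha x y z) (alpha (alpha w))
        + mul (homJac mul alpha w y z) (alpha (alpha x)).
    move=> w x y z; apply: startE.
    apply: (@stepE _ _ _ _ (1) (HMal (w + x) y z)).
    apply: (@stepE _ _ _ _ (-1) (HMal w y z)).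
    apply: (@stepE _ _ _ _ (-1) (HMal x y z)).
    fullnorm mul alpha AC HM mDl mDr mNl mNr mxx aD m0l m0r w x y z.
    gen_ring mul.
  move=> w x y z; apply: startE; apply: (@natK0 _ _ 2 _ ch) => //.
  apply: (@stepE _ _ _ _ (1) (Lin w x y z)).
  apply: (@stepE _ _ _ _ (2) (Lin w y x z)).
  apply: (@stepE _ _ _ _ (1) (Lin w y z x)).
  apply: (@stepE _ _ _ _ (-1) (Lin w z x y)).
  fullnorm mul alpha AC HM mDl mDr mNl mNr mxx aD m0l m0r w x y z.
  gen_ring mul.
split; first by case=> AC [HM HMal]; exact: fwd.
move=> AC HM; split; last exact: fwd.
move=> HS.
have mxx : forall u, mul u u = 0.
  move=> u; apply: (@natK0 _ _ 2 _ ch) => //.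
  by rewrite mulr2n {1}AC addNr.
move=> x y z; apply: startE; apply: (@natK0 _ _ 3 _ ch) => //.
apply: (@stepE _ _ _ _ (2) (HS x y x z)).
apply: (@stepE _ _ _ _ (-1) (HS x z x y)).
fullnorm mul alpha AC HM mDl mDr mNl mNr mxx aD m0l m0r x x y z.
gen_ring mul.
Qed.
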